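(* A countably infinite metric space is isometric to a dense subset of the Urysohn space $\mathbb U$ if and only if it satisfies the almost extension property.
   Context: $\mathbb U$ denotes Urysohn's universal separable metric space: the unique (up to isometry) complete separable metric space such that for every finite metric space $F=\{x_0,\dots,x_n\}$, every isometry $\{x_0,\dots,x_{n-1}\}\to\mathbb U$ extends to an isometry $F\to\mathbb U$. For $\lambda>1$, an injection $f$ is $\lambda$-bi-Lipschitz if for all distinct $a,b$ in its domain $d(f(a),f(b))<\lambda d(a,b)$ and $d(a,b)<\lambda d(f(a),f(b))$. A metric space $X$ has the almost extension property if for every finite metric space $F=\{x_0,\dots,x_{n-1},x_n\}$ and every $\lambda>1$, every $\lambda$-bi-Lipschitz map $f:\{x_0,\dots,x_{n-1}\}\to X$ extends to a $\lambda$-bi-Lipschitz map $\hat f:F\to X$. *)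

(* Defs.v *)
From Stdlib Require Import Reals Lra.
Open Scope R_scope.

(* A metric on a type T. (Nonnegativity follows from these axioms.) *)
Record metric_on (T : Type) (d : T -> T -> R) : Prop := {
  met_eq0 : forall x y, d x y = 0 <-> x = y;
  met_sym : forall x y, d x y = d y x;
  met_tri : forall x y z, d x z <= d x y + d y z
}.

(* A finite metric space F = {x_0, ..., x_n}, with points indexed by 0..n
   and metric dF restricted to those indices. *)
Definition fin_metric (n : nat) (dF : nat -> nat -> R) : Prop :=
  (forall i j, (i <= n)%nat -> (j <= n)%nat -> (dF i j = 0 <-> i = j)) /\
  (forall i j, (i <= n)%nat -> (j <= n)%nat -> dF i j = dF j i) /\
  (forall i j k, (i <= n)%nat -> (j <= n)%nat -> (k <= n)%nat ->
      dF i k <= dF i j + dF j k).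

Definition complete_space {T : Type} (d : T -> T -> R) : Prop :=
  forall u : nat -> T,
    (forall eps, 0 < eps -> exists N, forall m k, (N <= m)%nat -> (N <= k)%nat ->
        d (u m) (u k) < eps) ->
    exists l, forall eps, 0 < eps -> exists N, forall m, (N <= m)%nat -> d (u m) l < eps.

Definition dense_in {T : Type} (d : T -> T -> R) (A : T -> Prop) : Prop :=
  forall x eps, 0 < eps -> exists y, A y /\ d x y < eps.

Definition separable {T : Type} (d : T -> T -> R) : Prop :=
  exists s : nat -> T, dense_in d (fun y => exists k, s k = y).

Definition extension_property {T : Type} (d : T -> T -> R) : Prop :=
  forall (n : nat) (dF : nat -> nat -> R) (f : nat -> T),
    fin_metric n dF ->
    (forall i j, (i < n)%nat -> (j < n)%nat -> d (f i) (f j) = dF i j) ->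
    exists g : nat -> T,
      (forall i, (i < n)%nat -> g i = f i) /\
      (forall i j, (i <= n)%nat -> (j <= n)%nat -> d (g i) (g j) = dF i j).

(* Urysohn space: complete separable metric space with the extension property
   (unique up to isometry). *)
Definition is_urysohn {T : Type} (d : T -> T -> R) : Prop :=
  metric_on T d /\ complete_space d /\ separable d /\ extension_property d.

Definition bilip (m : nat) (lam : R) (dF : nat -> nat -> R)
    {T : Type} (d : T -> T -> R) (f : nat -> T) : Prop :=
  (forall i j, (i < m)%nat -> (j < m)%nat -> f i = f j -> i = j) /\
  (forall i j, (i < m)%nat -> (j < m)%nat -> i <> j ->
      d (f i) (f j) < lam * dF i j /\ dF i j < lam * d (f i) (f j)).

Definition almost_extension_property {T : Type} (d : T -> T -> R) : Prop :=
  forall (n : nat) (dF : nat -> nat -> R) (lam : R) (f : nat -> T),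
    fin_metric n dF -> 1 < lam ->
    bilip n lam dF d f ->
    exists g : nat -> T,
      (forall i, (i < n)%nat -> g i = f i) /\ bilip (S n) lam dF d g.

Definition countably_infinite (T : Type) : Prop :=
  exists e : nat -> T, (forall a b, e a = e b -> a = b) /\ (forall x, exists a, e a = x).

Definition isometric_to_dense_subset {T U : Type} (d : T -> T -> R) (dU : U -> U -> R) : Prop :=
  exists e : T -> U,
    (forall x y, dU (e x) (e y) = d x y) /\
    dense_in dU (fun u => exists x, e x = u).

(* Main.v *)
Require Import Defs.
From Stdlib Require Import Reals Lra Lia Classical ClassicalEpsilon.
Open Scope R_scope.

Lemma d_refl {T} (d : T -> T -> R) (H : metric_on T d) x : d x x = 0.
Proof. apply (met_eq0 T d H). reflexivity. Qed.

Lemma d_nonneg {T} (d : T -> T -> R) (H : metric_on T d) x y : 0 <= d x y.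
Proof.
  pose proof (met_tri T d H x y x). rewrite d_refl in H0 by exact H.
  rewrite (met_sym T d H y x) in H0. lra.
Qed.

Lemma d_pos {T} (d : T -> T -> R) (H : metric_on T d) x y : x <> y -> 0 < d x y.
Proof.
  intro Hne. destruct (Rle_lt_or_eq_dec 0 (d x y) (d_nonneg d H x y)); auto.
  exfalso. apply Hne. apply (met_eq0 T d H). auto.
Qed.

Lemma d_eq {T} (d : T -> T -> R) (H : metric_on T d) x y : d x y = 0 -> x = y.
Proof. apply (met_eq0 T d H). Qed.

Lemma ex_max1 (g : nat -> R) (B : R) n :
  (forall j, (j < n)%nat -> g j < B) -> exists t, t < B /\ forall j, (j < n)%nat -> g j <= t.
Proof.
  induction n as [|n IH]; intros Hg.
  - exists (B - 1). split; [lra|]. intros; lia.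
  - destruct IH as [t [Ht1 Ht2]]. { intros; apply Hg; lia. }
    exists (Rmax t (g n)). split.
    + apply Rmax_lub_lt; [auto| apply Hg; lia].
    + intros j Hj. destruct (Nat.eq_dec j n).
      * subst. apply Rmax_r.
      * eapply Rle_trans; [apply Ht2; lia | apply Rmax_l].
Qed.

Lemma ex_upper (g : nat -> R) n : exists M, 0 <= M /\ forall j, (j < n)%nat -> g j <= M.
Proof.
  induction n as [|n IH].
  - exists 0. split; [lra|]. intros; lia.
  - destruct IH as [t [Ht1 Ht2]].
    exists (Rmax t (g n)). split.
    + eapply Rle_trans; [exact Ht1| apply Rmax_l].
    + intros j Hj. destruct (Nat.eq_dec j n).
      * subst. apply Rmax_r.
      * eapply Rle_trans; [apply Ht2; lia | apply Rmax_l].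
Qed.

Lemma ex_min_pos (g : nat -> R) n :
  (forall j, (j < n)%nat -> 0 < g j) -> exists e, 0 < e /\ forall j, (j < n)%nat -> e <= g j.
Proof.
  intro H. destruct (ex_max1 (fun j => - g j) 0 n) as [t [Ht1 Ht2]].
  { intros j Hj. specialize (H j Hj). lra. }
  exists (- t). split; [lra|]. intros j Hj. specialize (Ht2 j Hj). simpl in Ht2. lra.
Qed.

Lemma ex_max2 (g : nat -> nat -> R) (B : R) n :
  (forall j l, (j < n)%nat -> (l < n)%nat -> g j l < B) ->
  exists t, t < B /\ forall j l, (j < n)%nat -> (l < n)%nat -> g j l <= t.
Proof.
  induction n as [|n IH]; intros Hg.
  - exists (B - 1). split; [lra|]. intros; lia.
  - destruct IH as [t0 [Ht01 Ht02]]. { intros; apply Hg; lia. }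
    destruct (ex_max1 (fun l => Rmax (g n l) (g l n)) B (S n)) as [t1 [Ht11 Ht12]].
    { intros l Hl. apply Rmax_lub_lt; apply Hg; lia. }
    exists (Rmax t0 t1). split; [apply Rmax_lub_lt; auto|].
    intros j l Hj Hl.
    destruct (Nat.eq_dec j n); [|destruct (Nat.eq_dec l n)].
    + subst. eapply Rle_trans; [|apply Rmax_r]. eapply Rle_trans; [|apply (Ht12 l Hl)].
      apply Rmax_l.
    + subst. eapply Rle_trans; [|apply Rmax_r]. eapply Rle_trans; [|apply (Ht12 j Hj)].
      apply Rmax_r.
    + eapply Rle_trans; [apply Ht02; lia|apply Rmax_l].
Qed.

Fixpoint mn (g : nat -> R) (k : nat) : R :=
  match k with 0 => g 0%nat | S k' => Rmin (mn g k') (g (S k')) end.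

Lemma mn_le g k j : (j <= k)%nat -> mn g k <= g j.
Proof.
  induction k as [|k IH]; intro Hj; simpl.
  - replace j with 0%nat by lia. lra.
  - destruct (Nat.eq_dec j (S k)).
    + subst. apply Rmin_r.
    + eapply Rle_trans; [apply Rmin_l|]. apply IH; lia.
Qed.

Lemma mn_att g k : exists j, (j <= k)%nat /\ mn g k = g j.
Proof.
  induction k as [|k IH]; simpl.
  - exists 0%nat. split; auto.
  - destruct IH as [j [Hj Hm]]. unfold Rmin. destruct (Rle_dec (mn g k) (g (S k))).
    + exists j. split; [lia|auto].
    + exists (S k). split; auto.
Qed.

Ltac eqbs := repeat match goal with |- context[Nat.eqb ?a ?b] => destruct (Nat.eqb_spec a b) end.

Lemma realize (U : Type) (dU : U -> U -> R) (HM : metric_on U dU)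
  (HE : extension_property dU) n (c : nat -> U) (h : nat -> R) :
  (forall i j, (i < n)%nat -> (j < n)%nat -> c i = c j -> i = j) ->
  (forall i, (i < n)%nat -> 0 < h i) ->
  (forall i j, (i < n)%nat -> (j < n)%nat -> h i <= h j + dU (c i) (c j)) ->
  (forall i j, (i < n)%nat -> (j < n)%nat -> dU (c i) (c j) <= h i + h j) ->
  exists q, forall i, (i < n)%nat -> dU q (c i) = h i.
Proof.
  intros Hinj Hpos Hl Hu.
  set (dF := fun i j => if Nat.eqb i n then (if Nat.eqb j n then 0 else h j)
                        else (if Nat.eqb j n then h i else dU (c i) (c j))).
  destruct (HE n dF c) as [g [Hg1 Hg2]].
  - split; [|split].
    + intros i j Hi Hj. unfold dF. eqbs; split; intro HH; try lia; try lra.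
      * specialize (Hpos j ltac:(lia)). lra.
      * specialize (Hpos i ltac:(lia)). lra.
      * apply Hinj; try lia. apply (d_eq dU HM). auto.
      * subst. apply d_refl; auto.
    + intros i j Hi Hj. unfold dF. eqbs; auto. apply (met_sym U dU HM).
    + intros i j k Hi Hj Hk. unfold dF. eqbs; try lia; try lra.
      * pose proof (Hpos j ltac:(lia)). lra.
      * pose proof (Hl k j ltac:(lia) ltac:(lia)). pose proof (met_sym U dU HM (c j) (c k)). lra.
      * pose proof (Hl i j ltac:(lia) ltac:(lia)). lra.
      * apply Hu; lia.
      * apply (met_tri U dU HM).
  - intros i j Hi Hj. unfold dF. eqbs; try lia. reflexivity.
  - exists (g n). intros i Hi. rewrite <- (Hg1 i Hi). rewrite (Hg2 n i) by lia.
    unfold dF. eqbs; try lia. reflexivity.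
Qed.

Lemma forward (U : Type) (dU : U -> U -> R) (HMU : metric_on U dU)
  (HEU : extension_property dU)
  (X : Type) (dX : X -> X -> R) (HX : metric_on X dX) (x0 : X) (e : X -> U)
  (Hiso : forall x y, dU (e x) (e y) = dX x y)
  (Hdense : dense_in dU (fun u => exists x, e x = u)) :
  almost_extension_property dX.
Proof.
  intros n dF lam f Hfin Hlam [Hfinj Hfb].
  destruct Hfin as [F0 [Fs Ft]].
  destruct (Nat.eq_dec n 0) as [Hn0|Hn0].
  { subst. exists (fun _ => x0). split; [intros; lia|]. split; intros; lia. }
  assert (Fnn : forall i j, (i <= n)%nat -> (j <= n)%nat -> 0 <= dF i j).
  { intros i j Hi Hj. pose proof (Ft i j i Hi Hj Hi). rewrite (Fs j i) in H by auto.
    assert (dF i i = 0) by (apply F0; auto). lra. }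
  assert (Fp : forall i j, (i <= n)%nat -> (j <= n)%nat -> i <> j -> 0 < dF i j).
  { intros i j Hi Hj Hne. destruct (Rle_lt_or_eq_dec 0 (dF i j) (Fnn i j Hi Hj)); auto.
    exfalso. apply Hne. apply F0; auto. }
  set (dp := fun i j => dX (f i) (f j)).
  destruct (ex_max2 (fun j l => if Nat.eqb j l then 0 else dp j l / dF j l) lam n) as [t0 [Ht0 Ht0']].
  { intros j l Hj Hl. destruct (Nat.eqb_spec j l); [lra|].
    destruct (Hfb j l Hj Hl n0) as [H1 H2]. pose proof (Fp j l ltac:(lia) ltac:(lia) n0).
    unfold dp. apply (Rmult_lt_reg_r (dF j l)); auto. unfold Rdiv.
    rewrite Rmult_assoc, Rinv_l by lra. lra. }
  set (t := Rmax 1 t0).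
  assert (Ht1 : 1 <= t) by apply Rmax_l.
  assert (Htl : t < lam) by (apply Rmax_lub_lt; lra).
  assert (Hdp : forall j l, (j < n)%nat -> (l < n)%nat -> dp j l <= t * dF j l).
  { intros j l Hj Hl. specialize (Ht0' j l Hj Hl). simpl in Ht0'.
    destruct (Nat.eqb_spec j l).
    - subst. unfold dp. rewrite d_refl by auto. rewrite (proj2 (F0 l l ltac:(lia) ltac:(lia)) eq_refl). lra.
    - pose proof (Fp j l ltac:(lia) ltac:(lia) n0).
      assert (dp j l = (dp j l / dF j l) * dF j l) by (field; lra).
      rewrite H0. apply Rmult_le_compat_r; [lra|]. eapply Rle_trans; [exact Ht0'|apply Rmax_r]. }
  assert (dpsym : forall i j, dp i j = dp j i) by (intros; unfold dp; apply (met_sym X dX HX)).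
  assert (dptri : forall i j k, dp i k <= dp i j + dp j k) by (intros; unfold dp; apply (met_tri X dX HX)).
  assert (dpnn : forall i j, 0 <= dp i j) by (intros; unfold dp; apply (d_nonneg dX HX)).
  set (D := fun i => mn (fun j => t * dF n j + dp j i) (n - 1)).
  assert (D_le : forall i j, (j < n)%nat -> D i <= t * dF n j + dp j i).
  { intros i j Hj. unfold D. apply (mn_le (fun j => t * dF n j + dp j i)). lia. }
  assert (D_att : forall i, exists j, (j < n)%nat /\ D i = t * dF n j + dp j i).
  { intros i. destruct (mn_att (fun j => t * dF n j + dp j i) (n - 1)) as [j [Hj Hm]].
    exists j. split; [lia|]. exact Hm. }
  assert (Dup : forall i, (i < n)%nat -> D i < lam * dF n i).
  { intros i Hi. pose proof (D_le i i Hi). assert (dp i i = 0) by (unfold dp; apply d_refl; auto).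
    pose proof (Fp n i ltac:(lia) ltac:(lia) ltac:(lia)). nra. }
  assert (Dlow : forall i, (i < n)%nat -> dF n i < lam * D i).
  { intros i Hi. destruct (D_att i) as [j [Hj HD]]. rewrite HD.
    pose proof (Fp n i ltac:(lia) ltac:(lia) ltac:(lia)).
    assert (lam * t > 1) by nra.
    destruct (Nat.eq_dec j i).
    - subst. pose proof (dpnn i i). assert (0 < (lam*t - 1) * dF n i) by (apply Rmult_lt_0_compat; lra). assert (0 <= lam * dp i i) by (apply Rmult_le_pos; lra). nra.
    - destruct (Hfb j i Hj Hi n0) as [_ H2].
      pose proof (Ft n j i ltac:(lia) ltac:(lia) ltac:(lia)).
      pose proof (Fnn n j ltac:(lia) ltac:(lia)). unfold dp in *. nra. }
  set (c := fun i => e (f i)).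
  assert (Hc : forall i j, dU (c i) (c j) = dp i j) by (intros; unfold c, dp; apply Hiso).
  destruct (realize U dU HMU HEU n c D) as [q Hq].
  - intros i j Hi Hj Hcij. apply Hfinj; auto. apply (d_eq dX HX).
    rewrite <- Hiso. fold (c i) (c j). rewrite Hcij. apply d_refl; auto.
  - intros i Hi. pose proof (Dlow i Hi). pose proof (Fp n i ltac:(lia) ltac:(lia) ltac:(lia)). nra.
  - intros i k Hi Hk. rewrite Hc. destruct (D_att k) as [j [Hj HD]]. rewrite HD.
    pose proof (D_le i j Hj). pose proof (dptri j k i). rewrite (dpsym k i) in H0. lra.
  - intros i k Hi Hk. rewrite Hc. destruct (D_att i) as [j [Hj HD]]. destruct (D_att k) as [l [Hl HD']].
    rewrite HD, HD'. pose proof (Hdp j l Hj Hl).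
    pose proof (Ft j n l ltac:(lia) ltac:(lia) ltac:(lia)). rewrite (Fs j n) in H0 by lia.
    pose proof (dptri i j k). pose proof (dptri j l k). rewrite (dpsym i j) in H1.
    assert (t * dF j l <= t * (dF n j + dF n l)) by (apply Rmult_le_compat_l; lra).
    lra.
  - destruct (ex_min_pos (fun i => Rmin (lam * dF n i - D i) ((lam * D i - dF n i) / lam)) n) as [eps [Heps Heps']].
    { intros i Hi. apply Rmin_glb_lt.
      - pose proof (Dup i Hi). lra.
      - pose proof (Dlow i Hi). apply Rdiv_lt_0_compat; lra. }
    destruct (Hdense q eps Heps) as [v [[x Hxv] Hqv]]. subst v.
    assert (Hx : forall i, (i < n)%nat -> dX x (f i) < lam * dF n i /\ dF n i < lam * dX x (f i)).
    { intros i Hi. rewrite <- Hiso. fold (c i). specialize (Heps' i Hi). simpl in Heps'.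
      pose proof (Rmin_l (lam * dF n i - D i) ((lam * D i - dF n i) / lam)).
      pose proof (Rmin_r (lam * dF n i - D i) ((lam * D i - dF n i) / lam)).
      assert (lam * ((lam * D i - dF n i) / lam) = lam * D i - dF n i) by (field; lra).
      pose proof (met_tri U dU HMU q (e x) (c i)) as T1.
      pose proof (met_tri U dU HMU (e x) q (c i)) as T2.
      rewrite (met_sym U dU HMU (e x) q) in T2.
      rewrite Hq in T1, T2 by auto.
      split.
      - lra.
      - assert (lam * eps <= lam * D i - dF n i).
        { rewrite <- H1. apply Rmult_le_compat_l; lra. }
        nra. }
    exists (fun i => if Nat.ltb i n then f i else x). split.
    + intros i Hi. destruct (Nat.ltb_spec i n); [auto|lia].
    + split.
      * intros i j Hi Hj. destruct (Nat.ltb_spec i n), (Nat.ltb_spec j n).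
        -- apply Hfinj; auto.
        -- intro Hfx. exfalso. destruct (Hx i H) as [_ H2]. rewrite <- Hfx in H2.
           rewrite d_refl in H2 by auto. pose proof (Fp n i ltac:(lia) ltac:(lia) ltac:(lia)). lra.
        -- intro Hfx. exfalso. destruct (Hx j H0) as [_ H2]. rewrite Hfx in H2.
           rewrite d_refl in H2 by auto. pose proof (Fp n j ltac:(lia) ltac:(lia) ltac:(lia)). lra.
        -- intros; lia.
      * intros i j Hi Hj Hne. destruct (Nat.ltb_spec i n), (Nat.ltb_spec j n).
        -- apply Hfb; auto.
        -- replace j with n by lia. rewrite (met_sym X dX HX), (Fs i n) by lia. apply Hx; auto.
        -- replace i with n by lia. apply Hx; auto.
        -- lia.
Qed.

Definition good {X U : Type} (dX : X -> X -> R) (dU : U -> U -> R)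
  (m : nat) (a : nat -> X) (b : nat -> U) : Prop :=
  (forall i j, (i < m)%nat -> (j < m)%nat -> dU (b i) (b j) = dX (a i) (a j)) /\
  (forall i j, (i < m)%nat -> (j < m)%nat -> a i = a j -> i = j).

Definition ext {X U : Type} (m : nat) (a : nat -> X) (b : nat -> U)
  (m' : nat) (a' : nat -> X) (b' : nat -> U) : Prop :=
  (m <= m')%nat /\ forall i, (i < m)%nat -> a' i = a i /\ b' i = b i.

Lemma ext_refl {X U : Type} m (a : nat -> X) (b : nat -> U) : ext m a b m a b.
Proof. split; auto. Qed.

Lemma ext_trans {X U : Type} m (a : nat -> X) (b : nat -> U) m1 a1 b1 m2 a2 b2 :
  ext m a b m1 a1 b1 -> ext m1 a1 b1 m2 a2 b2 -> ext m a b m2 a2 b2.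
Proof.
  intros [H1 H2] [H3 H4]. split; [lia|]. intros i Hi.
  destruct (H2 i Hi). destruct (H4 i ltac:(lia)). split; congruence.
Qed.

Lemma good_binj {X U : Type} (dX : X -> X -> R) (dU : U -> U -> R)
  (HX : metric_on X dX) (HMU : metric_on U dU) m a b :
  good dX dU m a b -> forall i j, (i < m)%nat -> (j < m)%nat -> b i = b j -> i = j.
Proof.
  intros [G1 G2] i j Hi Hj Hb. apply G2; auto. apply (d_eq dX HX).
  rewrite <- G1 by auto. rewrite Hb. apply d_refl; auto.
Qed.

Lemma forth (U : Type) (dU : U -> U -> R) (HMU : metric_on U dU)
  (HEU : extension_property dU)
  (X : Type) (dX : X -> X -> R) (HX : metric_on X dX) m a b :
  good dX dU m a b -> forall x,
  exists m' a' b', good dX dU m' a' b' /\ ext m a b m' a' b' /\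
    exists i, (i < m')%nat /\ a' i = x.
Proof.
  intros Hg x. destruct (classic (exists i, (i < m)%nat /\ a i = x)) as [Hin|Hout].
  { exists m, a, b. split; [auto|split; [apply ext_refl|auto]]. }
  destruct Hg as [G1 G2].
  destruct (realize U dU HMU HEU m b (fun i => dX x (a i))) as [q Hq].
  - apply (good_binj dX dU HX HMU m a b). split; auto.
  - intros i Hi. apply (d_pos dX HX). intro Hxa. apply Hout. exists i. auto.
  - intros i j Hi Hj. rewrite G1 by auto. pose proof (met_tri X dX HX x (a j) (a i)).
    rewrite (met_sym X dX HX (a j) (a i)) in H. lra.
  - intros i j Hi Hj. rewrite G1 by auto. pose proof (met_tri X dX HX (a i) x (a j)).
    rewrite (met_sym X dX HX (a i) x) in H. lra.
  - exists (S m), (fun i => if Nat.eqb i m then x else a i), (fun i => if Nat.eqb i m then q else b i).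
    split; [split|split].
    + intros i j Hi Hj. eqbs.
      * rewrite (d_refl dU HMU), (d_refl dX HX); auto.
      * rewrite Hq by lia. auto.
      * rewrite (met_sym U dU HMU), (met_sym X dX HX). rewrite Hq by lia. auto.
      * apply G1; lia.
    + intros i j Hi Hj. eqbs; intro Hij; try lia.
      * exfalso. apply Hout. exists j. split; [lia|auto].
      * exfalso. apply Hout. exists i. split; [lia|auto].
      * apply G2; auto; lia.
    + split; [lia|]. intros i Hi. eqbs; [lia|]. auto.
    + exists m. split; [lia|]. eqbs; auto. lia.
Qed.

Lemma back (U : Type) (dU : U -> U -> R) (HMU : metric_on U dU)
  (HEU : extension_property dU)
  (X : Type) (dX : X -> X -> R) (HX : metric_on X dX)
  (HA : almost_extension_property dX) m a b :
  good dX dU m a b -> forall u eps, 0 < eps ->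
  exists m' a' b', good dX dU m' a' b' /\ ext m a b m' a' b' /\
    exists i, (i < m')%nat /\ dU (b' i) u < eps.
Proof.
  intros Hg u eps Heps.
  destruct (classic (exists i, (i < m)%nat /\ dU (b i) u < eps)) as [Hin|Hout].
  { exists m, a, b. split; [auto|split; [apply ext_refl|auto]]. }
  assert (Hfar : forall i, (i < m)%nat -> eps <= dU (b i) u).
  { intros i Hi. apply Rnot_lt_le. intro. apply Hout. exists i; auto. }
  pose proof (good_binj dX dU HX HMU m a b Hg) as Hbinj.
  destruct Hg as [G1 G2].
  set (c := fun i => if Nat.ltb i m then b i else u).
  assert (Hcinj : forall i j, (i <= m)%nat -> (j <= m)%nat -> c i = c j -> i = j).
  { intros i j Hi Hj. unfold c. destruct (Nat.ltb_spec i m), (Nat.ltb_spec j m); intro Hc.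
    - apply Hbinj; auto.
    - exfalso. pose proof (Hfar i H). rewrite Hc, d_refl in H1 by auto. lra.
    - exfalso. pose proof (Hfar j H0). rewrite <- Hc, d_refl in H1 by auto. lra.
    - lia. }
  set (dF := fun i j => dU (c i) (c j)).
  set (delta := eps / 2).
  destruct (ex_upper (fun i => dU (b i) u) m) as [M [HM0 HM]].
  set (k := delta / (M + 1)).
  assert (Hk : 0 < k) by (unfold k, delta; apply Rdiv_lt_0_compat; lra).
  assert (HkM : k * (M + 1) = delta) by (unfold k; field; lra).
  set (lam := 1 + k).
  destruct (HA m dF lam a) as [g [Hg1 [Hginj Hgb]]].
  - split; [|split].
    + intros i j Hi Hj. unfold dF. split; intro H.
      * apply Hcinj; auto. apply (d_eq dU HMU); auto.
      * subst. apply d_refl; auto.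
    + intros; unfold dF; apply (met_sym U dU HMU).
    + intros; unfold dF; apply (met_tri U dU HMU).
  - unfold lam; lra.
  - split; auto. intros i j Hi Hj Hne. unfold dF, c.
    destruct (Nat.ltb_spec i m); [|lia]. destruct (Nat.ltb_spec j m); [|lia].
    rewrite G1 by auto. assert (0 < dX (a i) (a j)).
    { apply (d_pos dX HX). intro. apply Hne. apply G2; auto. }
    unfold lam. split; nra.
  - set (x := g m).
    assert (Hxi : forall i, (i < m)%nat ->
      dX x (a i) < lam * dU (b i) u /\ dU (b i) u < lam * dX x (a i) /\ x <> a i).
    { intros i Hi. rewrite <- (Hg1 i Hi). unfold x.
      destruct (Hgb m i ltac:(lia) ltac:(lia) ltac:(lia)) as [H1 H2].
      unfold dF, c in H1, H2. destruct (Nat.ltb_spec m m); [lia|].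
      destruct (Nat.ltb_spec i m); [|lia]. rewrite (met_sym U dU HMU) in H1, H2.
      split; [auto|split; [auto|]]. intro Hgg. apply Hginj in Hgg; lia. }
    assert (Hr : forall i, (i < m)%nat -> (lam - 1) * dU (b i) u < delta).
    { intros i Hi. specialize (HM i Hi). simpl in HM. unfold lam.
      replace (1 + k - 1) with k by ring. rewrite <- HkM. nra. }
    assert (Hdel : 0 < delta) by (unfold delta; lra).
    assert (Hdeps : delta < eps) by (unfold delta; lra).
    destruct (realize U dU HMU HEU (S m) c (fun i => if Nat.ltb i m then dX x (a i) else delta)) as [q Hq].
    + intros i j Hi Hj. apply Hcinj; lia.
    + intros i Hi. destruct (Nat.ltb_spec i m); auto.
      apply (d_pos dX HX). apply Hxi; auto.
    + intros i j Hi Hj. unfold c. destruct (Nat.ltb_spec i m), (Nat.ltb_spec j m).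
      * rewrite G1 by auto. pose proof (met_tri X dX HX x (a j) (a i)).
        rewrite (met_sym X dX HX (a j) (a i)) in H1. lra.
      * destruct (Hxi i H) as [H1 _]. pose proof (Hr i H). unfold lam in *. nra.
      * pose proof (Hfar j H0). rewrite (met_sym U dU HMU). pose proof (d_nonneg dX HX x (a j)). lra.
      * rewrite d_refl by auto. lra.
    + intros i j Hi Hj. unfold c. destruct (Nat.ltb_spec i m), (Nat.ltb_spec j m).
      * rewrite G1 by auto. pose proof (met_tri X dX HX (a i) x (a j)).
        rewrite (met_sym X dX HX (a i) x) in H1. lra.
      * destruct (Hxi i H) as [_ [H1 _]]. pose proof (Hr i H).
        pose proof (d_nonneg dX HX x (a i)).
        destruct (Rle_or_lt (dU (b i) u) (dX x (a i) + delta)); auto.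
        exfalso. assert (lam * (dU (b i) u - dX x (a i) - delta) > 0) by (unfold lam in *; nra).
        unfold lam in *. nra.
      * destruct (Hxi j H0) as [_ [H1 _]]. pose proof (Hr j H0).
        pose proof (d_nonneg dX HX x (a j)). rewrite (met_sym U dU HMU).
        destruct (Rle_or_lt (dU (b j) u) (delta + dX x (a j))); auto.
        exfalso. assert (lam * (dU (b j) u - dX x (a j) - delta) > 0) by (unfold lam in *; nra).
        unfold lam in *. nra.
      * rewrite d_refl by auto. lra.
    + exists (S m), (fun i => if Nat.eqb i m then x else a i), (fun i => if Nat.eqb i m then q else b i).
      split; [split|split].
      * intros i j Hi Hj. eqbs.
        -- rewrite (d_refl dU HMU), (d_refl dX HX); auto.
        -- pose proof (Hq j ltac:(lia)). unfold c in H. destruct (Nat.ltb_spec j m); [|lia]. auto.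
        -- rewrite (met_sym U dU HMU), (met_sym X dX HX).
           pose proof (Hq i ltac:(lia)). unfold c in H. destruct (Nat.ltb_spec i m); [|lia]. auto.
        -- apply G1; lia.
      * intros i j Hi Hj. eqbs; intro Hij; try lia.
        -- exfalso. apply (Hxi j ltac:(lia)). auto.
        -- exfalso. apply (Hxi i ltac:(lia)). auto.
        -- apply G2; auto; lia.
      * split; [lia|]. intros i Hi. eqbs; [lia|]. auto.
      * exists m. split; [lia|]. eqbs; [|lia]. pose proof (Hq m ltac:(lia)).
        unfold c in H. destruct (Nat.ltb_spec m m); [lia|]. rewrite H. auto.
Qed.

Lemma back_many (U : Type) (dU : U -> U -> R) (HMU : metric_on U dU)
  (HEU : extension_property dU)
  (X : Type) (dX : X -> X -> R) (HX : metric_on X dX)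
  (HA : almost_extension_property dX) (sd : nat -> U) m a b :
  good dX dU m a b -> forall K eps, 0 < eps ->
  exists m' a' b', good dX dU m' a' b' /\ ext m a b m' a' b' /\
    forall j, (j <= K)%nat -> exists i, (i < m')%nat /\ dU (b' i) (sd j) < eps.
Proof.
  intros Hg K eps Heps. induction K as [|K IH].
  - destruct (back U dU HMU HEU X dX HX HA m a b Hg (sd 0%nat) eps Heps) as [m' [a' [b' [H1 [H2 H3]]]]].
    exists m', a', b'. split; [auto|split; [auto|]]. intros j Hj. replace j with 0%nat by lia. auto.
  - destruct IH as [m1 [a1 [b1 [H1 [H2 H3]]]]].
    destruct (back U dU HMU HEU X dX HX HA m1 a1 b1 H1 (sd (S K)) eps Heps) as [m' [a' [b' [H4 [H5 H6]]]]].
    exists m', a', b'. split; [auto|split; [eapply ext_trans; eauto|]].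
    intros j Hj. destruct (Nat.eq_dec j (S K)). { subst; auto. }
    destruct (H3 j ltac:(lia)) as [i [Hi Hd]]. destruct H5 as [H5 H5'].
    exists i. split; [lia|]. destruct (H5' i Hi) as [_ ->]. auto.
Qed.

Record st (X U : Type) := mk { sm : nat; sa : nat -> X; sb : nat -> U }.
Arguments mk {X U}.
Arguments sm {X U}.
Arguments sa {X U}.
Arguments sb {X U}.

Lemma backward (U : Type) (dU : U -> U -> R) (HU : is_urysohn dU)
  (X : Type) (dX : X -> X -> R) (HX : metric_on X dX)
  (Hcount : countably_infinite X) (HA : almost_extension_property dX) :
  isometric_to_dense_subset dX dU.
Proof.
  destruct HU as [HMU [_ [[sd Hsd] HEU]]].
  destruct Hcount as [en [_ Hen]].
  set (G := fun s : st X U => good dX dU (sm s) (sa s) (sb s)).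
  set (E := fun (s s' : st X U) => ext (sm s) (sa s) (sb s) (sm s') (sa s') (sb s')).
  set (P := fun k s s' => G s' /\ E s s' /\ (exists i, (i < sm s')%nat /\ sa s' i = en k) /\
     forall j, (j <= k)%nat -> exists i, (i < sm s')%nat /\ dU (sb s' i) (sd j) < / (INR k + 1)).
  assert (Hstage : forall k s, G s -> exists s', P k s s').
  { intros k s Gs.
    destruct (forth U dU HMU HEU X dX HX _ _ _ Gs (en k)) as [m1 [a1 [b1 [H1 [H2 H3]]]]].
    assert (Hpos : 0 < / (INR k + 1)).
    { apply Rinv_0_lt_compat. pose proof (pos_INR k). lra. }
    destruct (back_many U dU HMU HEU X dX HX HA sd m1 a1 b1 H1 k _ Hpos) as [m2 [a2 [b2 [H4 [H5 H6]]]]].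
    exists (mk m2 a2 b2). split; [exact H4|split; [eapply ext_trans; eauto|split; [|exact H6]]].
    destruct H3 as [i [Hi Hai]]. destruct H5 as [H5 H5']. exists i. simpl. split; [lia|].
    destruct (H5' i Hi) as [-> _]. auto. }
  assert (F : forall k (s : {s | G s}), {s' : {s | G s} | P k (proj1_sig s) (proj1_sig s')}).
  { intros k s. apply constructive_indefinite_description.
    destruct (Hstage k (proj1_sig s) (proj2_sig s)) as [s' Hs'].
    exists (exist _ s' (proj1 Hs')). exact Hs'. }
  assert (G0 : G (mk 0%nat (fun _ => en 0%nat) (fun _ => sd 0%nat))).
  { split; simpl; intros; lia. }
  set (sq := fun k => nat_rect (fun _ => {s | G s}) (exist _ _ G0) (fun k s => proj1_sig (F k s)) k).
  set (S_ := fun k => proj1_sig (sq k)).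
  assert (Hsq : forall k, P k (S_ k) (S_ (S k))).
  { intros k. unfold S_. simpl. exact (proj2_sig (F k (sq k))). }
  assert (HG : forall k, G (S_ k)) by (intros; unfold S_; exact (proj2_sig (sq k))).
  assert (Hext : forall k l, (k <= l)%nat -> E (S_ k) (S_ l)).
  { intros k l Hkl. induction Hkl.
    - apply ext_refl.
    - eapply ext_trans; [exact IHHkl|]. apply (Hsq m). }
  assert (Hpres : forall x, exists p : nat * nat, (snd p < sm (S_ (fst p)))%nat /\ sa (S_ (fst p)) (snd p) = x).
  { intros x. destruct (Hen x) as [K HK]. destruct (Hsq K) as [_ [_ [[i [Hi Hai]] _]]].
    exists (S K, i). simpl. split; auto. congruence. }
  set (e := fun x => let p := proj1_sig (constructive_indefinite_description _ (Hpres x)) in sb (S_ (fst p)) (snd p)).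
  assert (Hkey : forall T i, (i < sm (S_ T))%nat -> e (sa (S_ T) i) = sb (S_ T) i).
  { intros T i Hi. unfold e.
    destruct (constructive_indefinite_description _ (Hpres (sa (S_ T) i))) as [[K i'] [Hi' Ha']].
    simpl in *. set (T' := Nat.max T K).
    destruct (Hext T T' ltac:(lia)) as [_ E1]. destruct (Hext K T' ltac:(lia)) as [_ E2].
    destruct (E1 i Hi) as [A1 B1]. destruct (E2 i' Hi') as [A2 B2].
    destruct (HG T') as [G1 _].
    rewrite <- B1, <- B2. apply (d_eq dU HMU).
    rewrite G1 by (destruct (Hext K T' ltac:(lia)); destruct (Hext T T' ltac:(lia)); lia).
    rewrite A1, A2, Ha'. apply d_refl; auto. }
  exists e. split.
  - intros x y. destruct (Hpres x) as [[K i] [Hi Hx]]. destruct (Hpres y) as [[L j] [Hj Hy]].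
    simpl in *. set (T := Nat.max K L).
    destruct (Hext K T ltac:(lia)) as [L1 E1]. destruct (Hext L T ltac:(lia)) as [L2 E2].
    destruct (E1 i Hi) as [A1 _]. destruct (E2 j Hj) as [A2 _].
    subst x y. rewrite <- A1, <- A2. rewrite !Hkey by lia.
    destruct (HG T) as [G1 _]. apply G1; lia.
  - intros u eps Heps.
    destruct (Hsd u (eps / 2) ltac:(lra)) as [v [[j Hj] Huv]]. subst v.
    destruct (archimed_cor1 (eps / 2) ltac:(lra)) as [N [HN HN0]].
    set (k := Nat.max j N).
    destruct (Hsq k) as [_ [_ [_ Hb]]]. destruct (Hb j ltac:(lia)) as [i [Hi Hd]].
    exists (e (sa (S_ (S k)) i)). split; [eauto|].
    rewrite Hkey by auto.
    assert (/ (INR k + 1) <= / INR N).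
    { apply Rinv_le_contravar. apply lt_0_INR; lia.
      assert (INR N <= INR k) by (apply le_INR; lia). lra. }
    pose proof (met_tri U dU HMU u (sd j) (sb (S_ (S k)) i)).
    rewrite (met_sym U dU HMU (sd j)) in H0. lra.
Qed.

Theorem fact3p7 (U : Type) (dU : U -> U -> R) (HU : is_urysohn dU)
  (X : Type) (dX : X -> X -> R) (HX : metric_on X dX)
  (Hcount : countably_infinite X) :
  isometric_to_dense_subset dX dU <-> almost_extension_property dX.
Proof.
  split.
  - intros [e [Hiso Hdense]]. destruct HU as [HMU [_ [_ HEU]]].
    destruct Hcount as [en _].
    exact (forward U dU HMU HEU X dX HX (en 0%nat) e Hiso Hdense).
  - intro HA. exact (backward U dU HU X dX HX Hcount HA).
Qed.
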